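(* Let $p,q$ be odd primes with $q-p=2$ and $p\equiv 3\pmod 4$. Let $K=\mathbb{Q}(\sqrt{-1})$, $i=\sqrt{-1}$, $\pi_2=1-i$, and write $q=\mu\bar\mu$ with $\mu,\bar\mu\in\mathbb{Z}[i]$ conjugate irreducible elements. Let $\varepsilon\in\{1,-1\}$ and $E=E_\varepsilon: y^2=x(x+\varepsilon p)(x+\varepsilon q)$. Then: (1) if $d\in K(S,2)$ satisfies one of (a) $\mu\mid d$, (b) $\bar\mu\mid d$, (c) $p\mid d$, (d) $\pi_2\mid d$, then $d\notin S^{(\varphi)}(E/K)$; (2) $i\in S^{(\varphi)}(E/K)$ iff $p\equiv 7\pmod 8$.
   Context: Let $E'=E'_\varepsilon: y^2=x^3-2\varepsilon(p+q)x^2+4x$ and $\varphi:E\to E'$, $(x,y)\mapsto(y^2/x^2,y(pq-x^2)/x^2)$. Let $S=\{\infty\}\cup\{$primes of $K$ dividing $2pq\}$ and $K(S,2)=\{d\in K^*/K^{*2}:\ \mathrm{ord}_v(d)$ even for all $v\notin S\}=\langle i,\pi_2,\mu,\bar\mu,p\rangle$. The $\varphi$-Selmer group is identified with $S^{(\varphi)}(E/K)=\{d\in K(S,2): C_d(K_v)\neq\emptyset\ \forall v\in S\}$, where $C_d: dw^2=d^2-2\varepsilon(p+q)dz^2+4z^4$. ''$\pi\mid d$'' means $\mathrm{ord}_\pi(d)$ is odd. *)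

(* Defs.v *)
(* K = Q(i) is realised inside algC (algebraic complex numbers). *)
From mathcomp Require Import all_boot all_order all_algebra.
From mathcomp Require Import algC.
Set Implicit Arguments. Unset Strict Implicit. Unset Printing Implicit Defensive.
Import Order.TTheory GRing.Theory Num.Theory.
Local Open Scope ring_scope.

Definition Zi (x : algC) : Prop := exists a b : int, x = a%:~R + 'i * b%:~R.
Definition Kq (x : algC) : Prop := exists a b : rat, x = ratr a + 'i * ratr b.

Definition gdvd (a b : algC) : Prop := exists c, Zi c /\ b = a * c.
Definition gunit (u : algC) : Prop := Zi u /\ gdvd u 1.

Definition girred (m : algC) : Prop :=
  [/\ Zi m, m != 0, ~ gunit m &
      forall b c, Zi b -> Zi c -> m = b * c -> gunit b \/ gunit c].
Definition gprime (m : algC) : Prop :=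
  [/\ Zi m, m != 0, ~ gunit m &
      forall a b, Zi a -> Zi b -> gdvd m (a * b) -> gdvd m a \/ gdvd m b].

(* "pi | d" in the paper's sense: ord_pi(d) is odd (d in K^* ). *)
Definition ord_odd (pi d : algC) : Prop :=
  exists (k : int) (a b : algC),
    [/\ Zi a /\ Zi b, ~ gdvd pi a, ~ gdvd pi b,
        d = pi ^ k * a / b & odd `|k|%N].

(* ord_pi(x) >= N, for x in K (x = 0 allowed). *)
Definition vge (pi x : algC) (N : nat) : Prop :=
  exists a b, [/\ Zi a, Zi b, ~ gdvd pi b & x = pi ^+ N * a / b].

(* pi-adic Cauchy sequences of elements of K, and pi-adic null sequences:
   the completion K_pi is the space of such Cauchy sequences modulo null ones. *)
Definition vcauchy (pi : algC) (u : nat -> algC) : Prop :=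
  (forall n, Kq (u n)) /\
  forall N : nat, exists M : nat, forall m n : nat,
      (M <= m)%N -> (M <= n)%N -> vge pi (u m - u n) N.
Definition vnull (pi : algC) (u : nat -> algC) : Prop :=
  forall N : nat, exists M : nat, forall n : nat, (M <= n)%N -> vge pi (u n) N.

Definition Cd_eq (eps : int) (p q : nat) (d z w : algC) : algC :=
  d * w ^+ 2 - (d ^+ 2 - 2 * eps%:~R * (p + q)%:R * d * z ^+ 2 + 4 * z ^+ 4).

(* C_d(K_pi) <> empty, for a finite prime pi : a point (z,w) in K_pi^2, where
   z, w are given by pi-adic Cauchy sequences in K. *)
Definition loc_solv (pi : algC) (eps : int) (p q : nat) (d : algC) : Prop :=
  exists z w : nat -> algC,
    [/\ vcauchy pi z, vcauchy pi w & vnull pi (fun n => Cd_eq eps p q d (z n) (w n))].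

(* C_d(K_infty) <> empty : K_infty = C (K is imaginary quadratic); we use
   the algebraically closed field algC. *)
Definition inf_solv (eps : int) (p q : nat) (d : algC) : Prop :=
  exists z w : algC, Cd_eq eps p q d z w = 0.

(* d represents an element of K(S,2), S = {infty} u {primes dividing 2pq}. *)
Definition in_KS2 (p q : nat) (d : algC) : Prop :=
  [/\ Kq d, d != 0 &
      forall pi, gprime pi -> ~ gdvd pi (2 * p * q)%:R -> ~ ord_odd pi d].

Definition selmer_phi (eps : int) (p q : nat) (d : algC) : Prop :=
  [/\ in_KS2 p q d, inf_solv eps p q d &
      forall pi, gprime pi -> gdvd pi (2 * p * q)%:R -> loc_solv pi eps p q d].

(* Main.v *)
Require Import Defs.
From mathcomp Require Import all_boot all_order all_algebra all_field algC.
From mathcomp Require Import zify ring lra.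
From Stdlib Require Import Classical_Prop.
Set Implicit Arguments. Unset Strict Implicit. Unset Printing Implicit Defensive.
Import Order.TTheory GRing.Theory Num.Theory.
Local Open Scope ring_scope.

Lemma i2 : 'i * 'i = -1 :> algC. Proof. by rewrite -expr2 sqrCi. Qed.
Lemma conjz (n : int) : (n%:~R : algC)^* = n%:~R. Proof. exact: rmorph_int. Qed.

Lemma Zi_int (n : int) : Zi n%:~R.
Proof. by exists n, 0; rewrite mulr0 addr0. Qed.
Lemma Zi_nat (n : nat) : Zi n%:R.
Proof. by exists n%:Z, 0; rewrite mulr0 addr0. Qed.
Lemma Zi0 : Zi 0. Proof. exact: (Zi_nat 0). Qed.
Lemma Zi1 : Zi 1. Proof. exact: (Zi_nat 1). Qed.
Lemma Zi_i : Zi 'i. Proof. by exists 0, 1; rewrite mulr1 add0r. Qed.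
Lemma ZiD x y : Zi x -> Zi y -> Zi (x + y).
Proof. move=> [a [b ->]] [c [d ->]]; exists (a + c), (b + d); rewrite !rmorphD /=; ring. Qed.
Lemma ZiN x : Zi x -> Zi (- x).
Proof. move=> [a [b ->]]; exists (- a), (- b); rewrite !rmorphN /=; ring. Qed.
Lemma ZiB x y : Zi x -> Zi y -> Zi (x - y).
Proof. by move=> hx hy; apply: ZiD => //; apply: ZiN. Qed.
Lemma ZiM x y : Zi x -> Zi y -> Zi (x * y).
Proof.
move=> [a [b ->]] [c [d ->]]; exists (a * c - b * d), (a * d + b * c).
rewrite !(rmorphB, rmorphD, rmorphM) /=; ring: i2.
Qed.
Lemma ZiX x n : Zi x -> Zi (x ^+ n).
Proof. move=> hx; elim: n => [|n IH]; first by rewrite expr0; exact: Zi1.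
by rewrite exprS; apply: ZiM. Qed.
Lemma ZiC x : Zi x -> Zi x^*.
Proof. move=> [a [b ->]]; exists a, (- b); rewrite rmorphD rmorphM /= conjCi !conjz rmorphN /=; ring. Qed.

Lemma Kq_Zi x : Zi x -> Kq x.
Proof. by move=> [a [b ->]]; exists a%:~R, b%:~R; rewrite !ratr_int. Qed.
Lemma KqD x y : Kq x -> Kq y -> Kq (x + y).
Proof. move=> [a [b ->]] [c [d ->]]; exists (a + c), (b + d); rewrite !rmorphD /=; ring. Qed.
Lemma KqN x : Kq x -> Kq (- x).
Proof. move=> [a [b ->]]; exists (- a), (- b); rewrite !rmorphN /=; ring. Qed.
Lemma KqB x y : Kq x -> Kq y -> Kq (x - y).
Proof. by move=> hx hy; apply: KqD => //; apply: KqN. Qed.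
Lemma KqM x y : Kq x -> Kq y -> Kq (x * y).
Proof.
move=> [a [b ->]] [c [d ->]]; exists (a * c - b * d), (a * d + b * c).
rewrite !(rmorphB, rmorphD, rmorphM) /=; ring: i2.
Qed.
Lemma ratr_real (b : rat) : (ratr b : algC) \is Num.real.
Proof. by apply: Creal_Crat; apply/CratP; exists b. Qed.
Lemma KqC x : Kq x -> Kq x^*.
Proof.
move=> [a [b ->]]; exists a, (- b); rewrite rmorphD rmorphM /= conjCi.
rewrite !conj_Creal ?rmorphN /= ?ratr_real //; ring.
Qed.
Lemma KqV x : Kq x -> Kq x^-1.
Proof.
move=> hx; have [->|x0] := eqVneq x 0; first by rewrite invr0; exact: Kq_Zi Zi0.
have -> : x^-1 = x^* * (x * x^*)^-1.
  by rewrite invfM mulrA mulrC mulrA mulVf ?mul1r // conjC_eq0.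
apply: KqM; first exact: KqC.
move: hx => [a [b ->]]; exists (a ^+ 2 + b ^+ 2)^-1, 0.
rewrite rmorphD rmorphM /= conjCi !conj_Creal ?ratr_real //.
rewrite rmorph0 mulr0 addr0 fmorphV rmorphD !rmorphXn /=; congr (_^-1); ring: i2.
Qed.
Lemma KqDiv x y : Kq x -> Kq y -> Kq (x / y).
Proof. by move=> hx hy; apply: KqM => //; apply: KqV. Qed.

Lemma Zi_inj a b c d :
  a%:~R + 'i * b%:~R = c%:~R + 'i * d%:~R :> algC -> a = c /\ b = d.
Proof.
move=> e; split.
  by have := congr1 (@Re _) e; rewrite !Re_rect ?realz // => /intr_inj.
by have := congr1 (@Im _) e; rewrite !Im_rect ?realz // => /intr_inj.
Qed.

Lemma Zi_normE (a b : int) :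
  (a%:~R + 'i * b%:~R) * (a%:~R + 'i * b%:~R)^* = (a ^+ 2 + b ^+ 2)%:~R :> algC.
Proof. rewrite rmorphD rmorphM /= conjCi !conjz rmorphD !rmorphXn /=; ring: i2. Qed.

Lemma Zi_nrm x : Zi x -> exists n : nat, x * x^* = n%:R.
Proof.
move=> [a [b ->]]; exists (absz (a ^+ 2 + b ^+ 2)); rewrite Zi_normE.
have h : 0 <= a ^+ 2 + b ^+ 2 by rewrite addr_ge0 // sqr_ge0.
by rewrite -[RHS]/(((absz _)%:Z)%:~R) abszE ger0_norm.
Qed.

Lemma gdvd0 pi : gdvd pi 0.
Proof. by exists 0; split; [exact: Zi0 | rewrite mulr0]. Qed.
Lemma gdvd_refl pi : gdvd pi pi.
Proof. by exists 1; split; [exact: Zi1 | rewrite mulr1]. Qed.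
Lemma gdvd_trans a b c : gdvd a b -> gdvd b c -> gdvd a c.
Proof.
move=> [u [hu ->]] [v [hv ->]]; exists (u * v); split; first exact: ZiM.
by rewrite mulrA.
Qed.
Lemma gdvdMr pi x y : gdvd pi x -> Zi y -> gdvd pi (x * y).
Proof. move=> [u [hu ->]] hy; exists (u * y); split; [exact: ZiM | by rewrite mulrA]. Qed.
Lemma gdvdMl pi x y : gdvd pi x -> Zi y -> gdvd pi (y * x).
Proof. by move=> h hy; rewrite mulrC; apply: gdvdMr. Qed.
Lemma gdvdD pi x y : gdvd pi x -> gdvd pi y -> gdvd pi (x + y).
Proof. move=> [u [hu ->]] [v [hv ->]]; exists (u + v); split; [exact: ZiD | by rewrite mulrDr]. Qed.
Lemma gdvdN pi x : gdvd pi x -> gdvd pi (- x).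
Proof. move=> [u [hu ->]]; exists (- u); split; [exact: ZiN | by rewrite mulrN]. Qed.
Lemma gdvdB pi x y : gdvd pi x -> gdvd pi y -> gdvd pi (x - y).
Proof. by move=> h1 h2; apply: gdvdD => //; apply: gdvdN. Qed.
Lemma gdvdDr pi x y : gdvd pi x -> gdvd pi (x + y) -> gdvd pi y.
Proof. by move=> h1 h2; have := gdvdB h2 h1; rewrite addrC addKr. Qed.

Lemma nrm_unit c : Zi c -> c * c^* = 1 -> gunit c.
Proof. by move=> hc e; split => //; exists (c^* : algC); split; [exact: ZiC | rewrite e]. Qed.

Lemma nrmM (x y : algC) : (x * y) * (x * y)^* = (x * x^*) * (y * y^*).
Proof. by rewrite rmorphM /=; ring. Qed.

Lemma gunit_nrm c : gunit c -> c * c^* = 1.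
Proof.
move=> [hc [d [hd e]]].
have [n hn] := Zi_nrm hc; have [m hm] := Zi_nrm hd.
have : ((n * m)%:R : algC) = 1 by rewrite natrM -hn -hm -nrmM -e rmorph1 mulr1.
move/eqP; rewrite -[1 : algC]/(1%:R) eqr_nat muln_eq1 => /andP[/eqP en _].
by rewrite hn en.
Qed.

Lemma gprime_nz pi : gprime pi -> pi != 0. Proof. by case. Qed.
Lemma gprime_Zi pi : gprime pi -> Zi pi. Proof. by case. Qed.

Lemma gprime_nrm pi : gprime pi -> exists n : nat, pi * pi^* = n%:R /\ (2 <= n)%N.
Proof.
move=> [hZ hnz hnu _]; have [n hn] := Zi_nrm hZ; exists n; split => //.
case: n hn => [|[|n]] hn //.
  by move/eqP: hn; rewrite mulf_eq0 conjC_eq0 orbb (negPf hnz).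
by case: hnu; apply: nrm_unit.
Qed.

Lemma gprime_ndvd1 pi : gprime pi -> ~ gdvd pi 1.
Proof. by move=> [hZ _ hnu _] h; apply: hnu. Qed.

Lemma gprimeM pi a b : gprime pi -> Zi a -> Zi b -> ~ gdvd pi a -> ~ gdvd pi b ->
  ~ gdvd pi (a * b).
Proof. by move=> [_ _ _ hp] ha hb na nb /(hp _ _ ha hb) []. Qed.

Lemma ndvd_nz pi b : ~ gdvd pi b -> b != 0.
Proof. by move=> h; apply/eqP => e; apply: h; rewrite e; exact: gdvd0. Qed.

Lemma factor_pi pi x : gprime pi -> Zi x -> x != 0 ->
  exists (e : nat) c, [/\ Zi c, ~ gdvd pi c & x = pi ^+ e * c].
Proof.
move=> hp hx xnz; have [N [hN N2]] := gprime_nrm hp.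
have [n hn] := Zi_nrm hx.
elim: n {-2}n (leqnn n) x hx xnz hn => [|n IH] k hk x hx xnz hn.
  move: hk; rewrite leqn0 => /eqP ek; move: hn; rewrite ek => /eqP.
  by rewrite mulf_eq0 conjC_eq0 orbb (negPf xnz).
case: (classic (gdvd pi x)) => [[c [hc ec]]|nd]; last first.
  by exists 0%N, x; split => //; rewrite expr0 mul1r.
have cnz : c != 0 by apply: contraNneq xnz => c0; rewrite ec c0 mulr0.
have [m hm] := Zi_nrm hc.
have ekm : k = (N * m)%N.
  apply/eqP; rewrite -(eqr_nat algC) natrM -hN -hm -hn ec; apply/eqP; exact: nrmM.
have m0 : (0 < m)%N.
  case: m hm {ekm} => // /eqP; rewrite mulf_eq0 conjC_eq0 orbb (negPf cnz) //.
have [e [d [hd nd ed]]] := IH m ltac:(rewrite -ltnS; apply: leq_trans hk; rewrite ekm; nia) c hc cnz hm.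
by exists e.+1, d; split => //; rewrite ec ed exprS mulrA.
Qed.

Definition Wv pi x (n : int) :=
  exists a b, [/\ Zi a, Zi b, ~ gdvd pi b & x = pi ^ n * a / b].
Definition Vv pi x (n : int) :=
  exists a b, [/\ Zi a, Zi b, ~ gdvd pi a, ~ gdvd pi b & x = pi ^ n * a / b].

Lemma vge_Wv pi x (N : nat) : vge pi x N <-> Wv pi x N.
Proof. by split => -[a [b [ha hb hn e]]]; exists a, b. Qed.

Lemma expz_split (pi : algC) (m n : int) : pi != 0 -> m <= n ->
  exists k : nat, pi ^ n = pi ^ m * pi ^+ k /\ n = m + k%:Z.
Proof.
move=> pnz le; exists (absz (n - m)).
have e : (absz (n - m))%:Z = n - m by rewrite abszE ger0_norm // subr_ge0.
split; last by rewrite e; ring.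
by rewrite exprnP e -expfzDr //; congr (_ ^ _); ring.
Qed.

Lemma Wv0 pi n : gprime pi -> Wv pi 0 n.
Proof.
move=> hp; exists 0, 1; split; [exact: Zi0 | exact: Zi1 | exact: gprime_ndvd1 |].
by rewrite mulr0 mul0r.
Qed.

Lemma Wv_Zi pi x : gprime pi -> Zi x -> Wv pi x 0.
Proof.
move=> hp hx; exists x, 1; split => //; [exact: Zi1 | exact: gprime_ndvd1 |].
by rewrite expr0z mul1r divr1.
Qed.

Lemma VW pi x n : Vv pi x n -> Wv pi x n.
Proof. by move=> [a [b [? ? ? ? ?]]]; exists a, b. Qed.

Lemma WvN pi x n : Wv pi x n -> Wv pi (- x) n.
Proof.
move=> [a [b [ha hb nb ->]]]; exists (- a), b; split => //; first exact: ZiN.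
by rewrite mulrN mulNr.
Qed.
Lemma VvN pi x n : Vv pi x n -> Vv pi (- x) n.
Proof.
move=> [a [b [ha hb na nb ->]]]; exists (- a), b; split => //; first exact: ZiN.
  by move=> /gdvdN; rewrite opprK.
by rewrite mulrN mulNr.
Qed.

Lemma WvD pi x y n : gprime pi -> Wv pi x n -> Wv pi y n -> Wv pi (x + y) n.
Proof.
move=> hp [a [b [ha hb nb ->]]] [c [d [hc hd nd ->]]].
exists (a * d + c * b), (b * d); split.
- by apply: ZiD; apply: ZiM.
- exact: ZiM.
- exact: gprimeM.
have := ndvd_nz nb; have := ndvd_nz nd => d0 b0.
by field; rewrite b0 d0.
Qed.

Lemma WvB pi x y n : gprime pi -> Wv pi x n -> Wv pi y n -> Wv pi (x - y) n.
Proof. by move=> hp h1 h2; apply: WvD => //; apply: WvN. Qed.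

Lemma WvM pi x y m n : gprime pi -> Wv pi x m -> Wv pi y n -> Wv pi (x * y) (m + n).
Proof.
move=> hp [a [b [ha hb nb ->]]] [c [d [hc hd nd ->]]].
exists (a * c), (b * d); split; [exact: ZiM | exact: ZiM | exact: gprimeM |].
rewrite expfzDr ?gprime_nz // invfM; ring.
Qed.

Lemma VvM pi x y m n : gprime pi -> Vv pi x m -> Vv pi y n -> Vv pi (x * y) (m + n).
Proof.
move=> hp [a [b [ha hb na nb ->]]] [c [d [hc hd nc nd ->]]].
exists (a * c), (b * d); split; [exact: ZiM | exact: ZiM | exact: gprimeM | exact: gprimeM |].
rewrite expfzDr ?gprime_nz // invfM; ring.
Qed.

Lemma VvX pi x m k : gprime pi -> Vv pi x m -> Vv pi (x ^+ k) (m * k%:Z).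
Proof.
move=> hp h; elim: k => [|k IH].
  rewrite expr0 mulr0; exists 1, 1; split; try exact: Zi1; try exact: gprime_ndvd1.
  by rewrite expr0z mul1r divr1.
by rewrite exprS -addn1 PoszD mulrDr mulr1 addrC; apply: VvM.
Qed.

Lemma VvV pi x m : gprime pi -> Vv pi x m -> Vv pi x^-1 (- m).
Proof.
move=> hp [a [b [ha hb na nb ->]]]; exists b, a; split => //.
by rewrite !invfM invrK -exprz_inv exprz_inv -invr_expz; ring.
Qed.

Lemma WvV pi x y m n : gprime pi -> Wv pi x m -> Vv pi y n -> Wv pi (x / y) (m - n).
Proof. by move=> hp h1 /(VvV hp) /VW h2; apply: WvM. Qed.

Lemma Wv_mono pi x m n : gprime pi -> Wv pi x n -> m <= n -> Wv pi x m.
Proof.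
move=> hp [a [b [ha hb nb ->]]] le; have [k [ek _]] := expz_split (gprime_nz hp) le.
exists (pi ^+ k * a), b; split => //; first by apply: ZiM => //; apply: ZiX; case: hp.
by rewrite ek; ring.
Qed.

Lemma VW_contra pi x m n : gprime pi -> Vv pi x m -> Wv pi x n -> m < n -> False.
Proof.
move=> hp [a [b [ha hb na nb ex]]] [c [d [hc hd nd ey]]] lt.
have [k [ek ekk]] := expz_split (gprime_nz hp) (ltW lt).
have k0 : (0 < k)%N by move: lt; rewrite ekk; case: k {ek ekk} => //; rewrite addr0 ltxx.
have pnz := gprime_nz hp.
have b0 := ndvd_nz nb; have d0 := ndvd_nz nd.
have pm0 : pi ^ m != 0 by rewrite expfz_eq0 negb_and pnz orbT.
have e : a * d = pi * (pi ^+ k.-1 * c * b).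
  have h : pi ^ m * a / b * (b * d) = pi ^ m * pi ^+ k * c / d * (b * d).
    by rewrite -ek -ey -ex.
  have e1 : pi ^ m * a / b * (b * d) = pi ^ m * (a * d) by field.
  have e2 : pi ^ m * pi ^+ k * c / d * (b * d) = pi ^ m * (pi ^+ k * c * b) by field.
  move: h; rewrite e1 e2 => /(mulfI pm0) ->.
  by rewrite -{1}(prednK k0) exprS !mulrA.
apply: (gprimeM hp ha hd na nd); exists (pi ^+ k.-1 * c * b); split => //.
by apply: ZiM => //; apply: ZiM => //; apply: ZiX; case: hp.
Qed.

Lemma Vv_add_lt pi x y m n : gprime pi -> Vv pi x m -> Wv pi y n -> m < n ->
  Vv pi (x + y) m.
Proof.
move=> hp [a [b [ha hb na nb ->]]] [c [d [hc hd nd ->]]] lt.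
have pnz := gprime_nz hp; have hpZ := gprime_Zi hp.
have [k [ek ekk]] := expz_split pnz (ltW lt).
have k0 : (0 < k)%N by move: lt; rewrite ekk; case: k {ek ekk} => //; rewrite addr0 ltxx.
have b0 := ndvd_nz nb; have d0 := ndvd_nz nd.
exists (a * d + pi ^+ k * c * b), (b * d); split.
- by apply: ZiD; apply: ZiM => //; apply: ZiM => //; apply: ZiX.
- exact: ZiM.
- move=> h; apply: (gprimeM hp ha hd na nd).
  have h2 : gdvd pi (pi ^+ k * c * b).
    rewrite -(prednK k0) exprS -!mulrA; apply: gdvdMr; first exact: gdvd_refl.
    by apply: ZiM; [apply: ZiX | apply: ZiM].
  by have := gdvdB h h2; rewrite addrK.
- exact: gprimeM.
- rewrite ek; set t := pi ^ m; set u := pi ^+ k.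
  by field; rewrite b0 d0.
Qed.

Lemma Vv_frac pi X Y : gprime pi -> Zi X -> Zi Y -> X != 0 -> Y != 0 ->
  exists m, Vv pi (X / Y) m.
Proof.
move=> hp hX hY X0 Y0.
have [e1 [c1 [h1 n1 ->]]] := factor_pi hp hX X0.
have [e2 [c2 [h2 n2 ->]]] := factor_pi hp hY Y0.
exists (e1%:Z - e2%:Z), c1, c2; split => //.
have pnz := gprime_nz hp; have c20 := ndvd_nz n2.
have v0 : pi ^+ e2 != 0 by rewrite expf_neq0.
rewrite expfzDr // -exprnN -exprnP; set u := pi ^+ e1; set v := pi ^+ e2.
by field; rewrite v0 c20.
Qed.

Lemma Kq_frac x : Kq x -> exists X Y, [/\ Zi X, Zi Y, Y != 0 & x = X / Y].
Proof.
move=> [r1 [r2 ->]].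
exists ((numq r1 * denq r2)%:~R + 'i * (numq r2 * denq r1)%:~R), ((denq r1 * denq r2)%:~R).
split; [by exists (numq r1 * denq r2), (numq r2 * denq r1) | exact: Zi_int | |].
  by rewrite intr_eq0 mulf_eq0 negb_or !denq_neq0.
rewrite /ratr !rmorphM /=.
have d1 : (denq r1)%:~R != 0 :> algC by rewrite intr_eq0 denq_neq0.
have d2 : (denq r2)%:~R != 0 :> algC by rewrite intr_eq0 denq_neq0.
by field; rewrite d1 d2.
Qed.

Lemma Vv_exists pi x : gprime pi -> Kq x -> x != 0 -> exists m, Vv pi x m.
Proof.
move=> hp hx x0; have [X [Y [hX hY Y0 ex]]] := Kq_frac hx.
rewrite ex; apply: Vv_frac => //.
by apply: contraNneq x0 => X0; rewrite ex X0 mul0r.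
Qed.

Lemma VvWv_mono pi x m n : gprime pi -> Vv pi x m -> n <= m -> Wv pi x n.
Proof. by move=> hp /VW h le; apply: Wv_mono h le. Qed.

Lemma rhs_val pi (A d z : algC) (k h j : int) :
  gprime pi -> Vv pi d k -> k = 2 * h + 1 -> Vv pi 4 (4 * j) -> Wv pi A (2 * j) -> Kq z ->
  exists r t : int, [/\ Vv pi (d ^+ 2 - A * d * z ^+ 2 + 4 * z ^+ 4) r, r <= 2 * k & r = 2 * t].
Proof.
move=> hp hd ek h4 hA hz.
have hd2 : Vv pi (d ^+ 2) (k * 2%:Z) by apply: VvX.
have [->|z0] := eqVneq z 0.
  exists (k * 2%:Z), k; split; last by ring.
    by have -> : d ^+ 2 - A * d * 0 ^+ 2 + 4 * 0 ^+ 4 = d ^+ 2 by ring.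
  by rewrite mulrC.
have [v hv] := Vv_exists hp hz z0.
have hz2 : Vv pi (z ^+ 2) (v * 2%:Z) by apply: VvX.
have hz4 : Vv pi (4 * z ^+ 4) (4 * j + v * 4%:Z) by apply: VvM => //; apply: VvX.
have hT2 : Wv pi (A * d * z ^+ 2) (2 * j + k + v * 2%:Z).
  by apply: WvM => //; [apply: WvM => //; apply: VW | apply: VW].
have [lt|ge] := ltrP (2 * k) (4 * j + v * 4%:Z).
  exists (k * 2%:Z), k; split; [|by rewrite mulrC|by ring].
  have -> : d ^+ 2 - A * d * z ^+ 2 + 4 * z ^+ 4 = d ^+ 2 + (4 * z ^+ 4 - A * d * z ^+ 2) by ring.
  apply: (Vv_add_lt (n := 2 * k + 1)) => //; last by lia.
  apply: WvB => //; first by apply: (VvWv_mono hp hz4); lia.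
  by apply: (Wv_mono hp hT2); lia.
exists (4 * j + v * 4%:Z), (2 * j + 2 * v); split; [|lia|lia].
have -> : d ^+ 2 - A * d * z ^+ 2 + 4 * z ^+ 4 = 4 * z ^+ 4 + (d ^+ 2 - A * d * z ^+ 2) by ring.
apply: (Vv_add_lt (n := 4 * j + v * 4%:Z + 1)) => //; last by lia.
apply: WvB => //; first by apply: (VvWv_mono hp hd2); lia.
by apply: (Wv_mono hp hT2); lia.
Qed.

Lemma no_loc_solv pi (eps : int) (p q : nat) (d : algC) (k j : int) :
  gprime pi -> Vv pi d k -> odd `|k|%N -> 0 <= j ->
  Vv pi 4 (4 * j) -> Wv pi (2 * eps%:~R * (p + q)%:R) (2 * j) ->
  ~ loc_solv pi eps p q d.
Proof.
move=> hp hd ok j0 h4 hA [z [w [[hz _] [hw _] hn]]].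
have [h ek] : exists h : int, k = 2 * h + 1.
  have em : absz k = ((absz k)./2).*2 + 1 by rewrite -{1}(odd_double_half (absz k)) ok addnC.
  case: k hd ok em => n hd ok em /=.
    by exists (n./2)%:Z; move: em => /= ->; rewrite -muln2; lia.
  exists (- (n.+1./2)%:Z - 1); move: em; rewrite NegzE /= => em.
  have : (n.+1 = (n.+1)./2.*2 + 1)%N by [].
  rewrite -muln2; lia.
have [M hM] := hn (absz (2 * k)).+1.
have hX := hM M (leqnn M); move/vge_Wv: hX => hX.
have [r [t [hr rle rt]]] := rhs_val hp hd ek h4 hA (hz M).
set R := _ - _ + _ in hr.
have eX : Cd_eq eps p q d (z M) (w M) = d * (w M) ^+ 2 - R by [].
rewrite eX in hX.
have habs : 2 * k <= (absz (2 * k))%:Z by rewrite abszE ler_norm.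
suff [m [hm mle]] : exists m, Vv pi (d * w M ^+ 2 - R) m /\ m <= 2 * k.
  apply: (VW_contra hp hm hX); rewrite -addn1 PoszD; lia.
have [w0|wnz] := eqVneq (w M) 0.
  exists r; split => //; rewrite w0 expr0n /= mulr0 sub0r; exact: VvN.
have [u hu] := Vv_exists hp (hw M) wnz.
have hT : Vv pi (d * w M ^+ 2) (k + u * 2%:Z) by apply: VvM => //; apply: VvX.
have [lt|ge] := ltrP (k + u * 2%:Z) r.
  exists (k + u * 2%:Z); split; last by lia.
  by apply: (Vv_add_lt (n := r)) => //; apply: WvN; apply: VW.
exists r; split => //.
rewrite addrC; apply: (Vv_add_lt (n := k + u * 2%:Z)) => //; first exact: VvN.
  exact: VW.
lia.
Qed.

Lemma Fdvd l (n : int) : prime l -> (l %| n)%Z = ((n%:~R : 'F_l) == 0).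
Proof. by move=> hl; apply: dvdz_pcharf; apply: pchar_Fp. Qed.

Lemma Fnat_dvd l (n : nat) : prime l -> (l %| n)%N = ((n%:R : 'F_l) == 0).
Proof. by move=> hl; apply: dvdn_pcharf; apply: pchar_Fp. Qed.

Lemma Fermat l (x : 'F_l) : prime l -> x != 0 -> x ^+ l.-1 = 1.
Proof.
move=> hl x0.
have h : forall n, n = #|'F_l| -> x ^+ n = x by move=> n ->; exact: expf_card.
have := h l (esym (card_Fp hl)); rewrite -[X in x ^+ X](prednK (prime_gt0 hl)) exprS.
by move=> /eqP; rewrite -[X in _ == X]mulr1 (inj_eq (mulfI x0)) => /eqP.
Qed.

Lemma Fint l (y : 'F_l) : exists n : int, n%:~R = y.
Proof. by exists (y : nat)%:Z; exact: natr_Zp. Qed.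

Lemma F2nz l : prime l -> odd l -> (2%:R : 'F_l) != 0.
Proof.
move=> hl ol; rewrite -Fnat_dvd //; apply/negP => /(dvdn_leq (isT : (0 < 2)%N)).
case: l hl ol => [|[|[|l]]] //.
Qed.

Lemma Fsq1 l (t : 'F_l) : t ^+ 2 = 1 -> t = 1 \/ t = -1.
Proof.
move=> h; have : (t - 1) * (t + 1) = 0 by rewrite -subr_sqr h expr1n subrr.
by move/eqP; rewrite mulf_eq0 subr_eq0 addr_eq0 => /orP[/eqP ->|/eqP ->]; [left|right].
Qed.

Lemma Fnosqrt_m1 l (s : 'F_l) : prime l -> (l %% 4 = 3)%N -> s ^+ 2 <> -1.
Proof.
move=> hl l4 hs.
have ol : odd l by rewrite (divn_eq l 4) l4 oddD oddM andbF.
have s0 : s != 0.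
  by apply/eqP => e; move: hs; rewrite e expr0n /= => /eqP; rewrite eq_sym oppr_eq0 oner_eq0.
have := Fermat hl s0.
have -> : l.-1 = (2 * (2 * (l %/ 4) + 1))%N by have := divn_eq l 4; lia.
rewrite exprM hs -signr_odd oddD oddM /= expr1 => /eqP.
rewrite eq_sym -subr_eq0 opprK => /eqP h.
by have := F2nz hl ol; rewrite mulr2n h eqxx.
Qed.

Lemma natzR (R : pzRingType) (n : nat) : ((n%:Z)%:~R : R) = n%:R. Proof. by []. Qed.

Lemma ZiP x : Zi x -> exists a b : int, x = a%:~R + 'i * b%:~R. Proof. by []. Qed.

Lemma ZiM_coord (a b c d : int) :
  (a%:~R + 'i * b%:~R) * (c%:~R + 'i * d%:~R) =
  (a * c - b * d)%:~R + 'i * (a * d + b * c)%:~R :> algC.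
Proof. rewrite !(rmorphB, rmorphD, rmorphM) /=; ring: i2. Qed.

Lemma p_sum_sq l (a b : int) : prime l -> (l %% 4 = 3)%N ->
  (l %| a ^+ 2 + b ^+ 2)%Z -> (l %| a)%Z /\ (l %| b)%Z.
Proof.
move=> hl l4; rewrite !Fdvd // rmorphD !rmorphXn /= => /eqP h.
have [b0|b0] := eqVneq (b%:~R : 'F_l) 0.
  move: h; rewrite b0 expr0n /= addr0 => /eqP; rewrite expf_eq0 /= => /eqP ->.
  by split.
exfalso; apply: (@Fnosqrt_m1 l ((a%:~R : 'F_l) / b%:~R) hl l4).
rewrite expr_div_n; apply: (@mulIf _ ((b%:~R : 'F_l) ^+ 2)); first exact: expf_neq0.
rewrite divfK ?expf_neq0 // mulN1r; by apply/eqP; rewrite -addr_eq0 h.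
Qed.

Lemma p_dvd l (a b : int) :
  gdvd l%:R (a%:~R + 'i * b%:~R) <-> (l %| a)%Z /\ (l %| b)%Z.
Proof.
split.
  move=> [c [[c1 [c2 ec]] e]]; move: e; rewrite ec.
  have -> : (l%:R : algC) * (c1%:~R + 'i * c2%:~R) = (l%:Z * c1)%:~R + 'i * (l%:Z * c2)%:~R.
    by rewrite !rmorphM /= natzR; ring.
  by move=> /Zi_inj [-> ->]; split; apply: dvdz_mulr.
move=> [/dvdzP [c1 ->] /dvdzP [c2 ->]]; exists (c1%:~R + 'i * c2%:~R); split.
  by exists c1, c2.
by rewrite !rmorphM /= natzR; ring.
Qed.

Lemma p_gprime l : prime l -> (l %% 4 = 3)%N -> gprime l%:R.
Proof.
move=> hl l4; split.
- exact: Zi_nat.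
- by rewrite pnatr_eq0 -lt0n prime_gt0.
- move=> /gunit_nrm; rewrite conjC_nat -natrM -[1]/(1%:R) => /eqP; rewrite eqr_nat.
  by rewrite muln_eq1 andbb => /eqP e; move: hl; rewrite e.
move=> x y [a [b ->]] [c [d ->]]; rewrite ZiM_coord => /p_dvd [h1 h2].
rewrite !p_dvd.
have : (l %| (a ^+ 2 + b ^+ 2) * (c ^+ 2 + d ^+ 2))%Z.
  have -> : (a ^+ 2 + b ^+ 2) * (c ^+ 2 + d ^+ 2) = (a * c - b * d) ^+ 2 + (a * d + b * c) ^+ 2 by ring.
  by apply: rpredD; rewrite expr2; apply: dvdz_mulr.
move=> H.
have : (((a ^+ 2 + b ^+ 2)%:~R : 'F_l) * (c ^+ 2 + d ^+ 2)%:~R) == 0 by rewrite -rmorphM -Fdvd.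
by rewrite mulf_eq0 -!Fdvd // => /orP[] /(p_sum_sq hl l4); [left|right].
Qed.

Lemma int_parity (x : int) : (exists t, x = 2 * t) \/ (exists t, x = 2 * t + 1).
Proof.
have e := divz_eq x 2; have h1 := @modz_ge0 x 2 isT; have h2 := @ltz_pmod x 2 isT.
have [h|h] : (x %% 2)%Z = 0 \/ (x %% 2)%Z = 1 by lia.
  by left; exists (x %/ 2)%Z; lia.
by right; exists (x %/ 2)%Z; lia.
Qed.

Lemma pi2_dvd (a b : int) :
  gdvd (1 - 'i) (a%:~R + 'i * b%:~R) <-> exists t, a + b = 2 * t.
Proof.
split.
  move=> [c [[c1 [c2 ec]] e]]; move: e; rewrite ec.
  have -> : (1 - 'i) * (c1%:~R + 'i * c2%:~R) = (c1 + c2)%:~R + 'i * (c2 - c1)%:~R :> algC.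
    by rewrite rmorphD rmorphB /=; ring: i2.
  by move=> /Zi_inj [-> ->]; exists c2; lia.
move=> [t et]; exists ((a - t)%:~R + 'i * t%:~R); split; first by exists (a - t), t.
have -> : b = 2 * t - a by lia.
by rewrite rmorphB rmorphM /=; ring: i2.
Qed.

Lemma pi2_gprime : gprime (1 - 'i).
Proof.
split.
- by apply: ZiB; [exact: Zi1 | exact: Zi_i].
- rewrite subr_eq0; apply/eqP => e; have := i2; rewrite -e mulr1 => /eqP.
  by rewrite -subr_eq0 opprK -[1 + 1 : algC]/(2%:R) pnatr_eq0.
- move=> /gunit_nrm; rewrite rmorphB /= conjCi rmorph1 opprK.
  have -> : (1 - 'i) * (1 + 'i) = 2%:R :> algC by rewrite -subr_sqr expr1n sqrCi opprK.
  by move/eqP; rewrite -[1 : algC]/(1%:R) eqr_nat.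
move=> x y [a [b ->]] [c [d ->]]; rewrite ZiM_coord => /pi2_dvd [t et].
rewrite !pi2_dvd.
case: (int_parity (a + b)) => [h|[s hs]]; first by left.
case: (int_parity (c + d)) => [h|[u hu]]; first by right.
exfalso.
have : (a + b) * (c + d) - 2 * (b * d) = 2 * t by rewrite -et; ring.
rewrite hs hu; nia.
Qed.

Lemma split_prime (q : nat) (nu : algC) : prime q -> odd q -> Zi nu -> q%:R = nu * nu^* ->
  exists r : int, [/\ ((r ^+ 2 + 1)%:~R : 'F_q) = 0,
    forall a b : int, gdvd nu (a%:~R + 'i * b%:~R) <-> (q %| a + r * b)%Z & gprime nu].
Proof.
move=> hq oq [m1 [m2 enu]] hnu.
have eq : q%:Z = m1 ^+ 2 + m2 ^+ 2.
  by apply: (@intr_inj algC); rewrite natzR hnu enu Zi_normE.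
have q2 : (2 <= q)%N by apply: prime_gt1.
have m2nz : (m2%:~R : 'F_q) != 0.
  apply/negP; rewrite -Fdvd // => /dvdzP [t et].
  have : (q %| m1 ^+ 2)%Z.
    have h : m1 ^+ 2 = q%:Z - m2 ^+ 2 by rewrite eq; ring.
    have -> : m1 ^+ 2 = q%:Z * (1 - q%:Z * t ^+ 2) by rewrite h et; ring.
    exact: dvdz_mulr (dvdzz _).
  rewrite Fdvd // rmorphXn /= expf_eq0 /= -Fdvd // => /dvdzP [s es].
  have : q%:Z * (q%:Z * (s ^+ 2 + t ^+ 2)) = q%:Z.
    by rewrite [in RHS]eq es et; ring.
  move=> e1; have e2 : q%:Z * (s ^+ 2 + t ^+ 2) = 1.
    by apply: (@mulfI _ q%:Z); [apply/eqP; lia | rewrite mulr1].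
  have := dvdz_mulr (s ^+ 2 + t ^+ 2) (dvdzz q%:Z).
  by rewrite e2 dvdz1 /= => /eqP q1; move: q2; rewrite q1.
have [r er] := Fint (- (m1%:~R : 'F_q) / m2%:~R).
have qF : (q%:~R : 'F_q) = 0 by apply/eqP; rewrite -Fdvd // dvdzz.
have hr1 : ((m1 + r * m2)%:~R : 'F_q) = 0.
  by rewrite rmorphD rmorphM /= er divfK // addrN.
have hr2 : ((r ^+ 2 + 1)%:~R : 'F_q) = 0.
  have : ((r ^+ 2 + 1)%:~R : 'F_q) * (m2%:~R) ^+ 2 = ((m1 ^+ 2 + m2 ^+ 2)%:~R : 'F_q).
    rewrite rmorphD rmorphXn /= er rmorph1 mulrDl mul1r expr_div_n divfK ?expf_neq0 // sqrrN.
    by rewrite rmorphD !rmorphXn.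
  rewrite -eq qF => /eqP; rewrite mulf_eq0 expf_eq0 (negPf m2nz) andbF orbF.
  by move/eqP.
have hr3 : ((m2 - r * m1)%:~R : 'F_q) = 0.
  have -> : m2 - r * m1 = m2 * (r ^+ 2 + 1) - r * (m1 + r * m2) by ring.
  by rewrite rmorphB !rmorphM /= hr1 hr2 !mulr0 subr0.
have /dvdzP [s2 es2] : (q %| m1 + r * m2)%Z by rewrite Fdvd // hr1.
have /dvdzP [s1 es1] : (q %| m2 - r * m1)%Z by rewrite Fdvd // hr3.
have q0 : (q%:R : algC) != 0 by rewrite pnatr_eq0 -lt0n prime_gt0.
have ht : nu * (s1%:~R + 'i * s2%:~R) = 'i - r%:~R.
  apply: (mulfI q0); rewrite mulrCA -[q%:R]natzR.
  have -> : (q%:Z)%:~R * (s1%:~R + 'i * s2%:~R) = (s1 * q%:Z)%:~R + 'i * (s2 * q%:Z)%:~R :> algC.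
    by rewrite !rmorphM /=; ring.
  rewrite -es1 -es2 enu eq !(rmorphD, rmorphB, rmorphM, rmorphXn) /=; ring: i2.
set t := s1%:~R + 'i * s2%:~R in ht.
have hZt : Zi t by exists s1, s2.
have hchar : forall a b : int, gdvd nu (a%:~R + 'i * b%:~R) <-> (q %| a + r * b)%Z.
  move=> a b; split.
    move=> [c [hc ec]].
    have hn : ((a + r * b)%:~R : algC) = nu * (c - b%:~R * t).
      rewrite mulrBr -ec.
      have -> : nu * (b%:~R * t) = b%:~R * ('i - r%:~R) by rewrite -ht; ring.
      rewrite rmorphD rmorphM /=; ring.
    have hc' : Zi (c - b%:~R * t) by apply: ZiB => //; apply: ZiM => //; exact: Zi_int.
    have [N hN] := Zi_nrm hc'.
    have : ((a + r * b) ^+ 2)%:~R = (q%:Z * N%:Z)%:~R :> algC.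
      rewrite rmorphXn rmorphM /= natzR natzR hnu -hN expr2.
      rewrite -{2}(conjz (a + r * b)) hn; ring.
    move/intr_inj => e2.
    have : (q %| (a + r * b) ^+ 2)%Z by rewrite e2 dvdz_mulr.
    by rewrite !Fdvd // rmorphXn /= expf_eq0.
  move=> /dvdzP [k ek]; exists (k%:~R * nu^* + b%:~R * t); split.
    apply: ZiD; apply: ZiM; try exact: Zi_int; last exact: hZt.
    by apply: ZiC; exists m1, m2.
  have -> : a = k * q%:Z - r * b by rewrite -ek; ring.
  rewrite mulrDr.
  have -> : nu * (b%:~R * t) = b%:~R * ('i - r%:~R) by rewrite -ht; ring.
  have -> : nu * (k%:~R * nu^*) = k%:~R * q%:R by rewrite hnu; ring.
  rewrite !(rmorphB, rmorphM) /= natzR; ring.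
exists r; split => //; split.
- by exists m1, m2.
- by apply/eqP => e; move: q0; rewrite hnu e mul0r eqxx.
- move=> /gunit_nrm; rewrite -hnu -[1]/(1%:R) => /eqP; rewrite eqr_nat => /eqP q1.
  by move: q2; rewrite q1.
move=> x y [a [b ->]] [c [d ->]]; rewrite ZiM_coord hchar !hchar.
move=> H.
have : (((a + r * b)%:~R : 'F_q) * (c + r * d)%:~R) == 0.
  rewrite -rmorphM -Fdvd //.
  have -> : (a + r * b) * (c + r * d) = (a * c - b * d + r * (a * d + b * c)) + (b * d) * (r ^+ 2 + 1) by ring.
  by apply: rpredD => //; apply: dvdz_mull; rewrite Fdvd // hr2.
by rewrite mulf_eq0 -!Fdvd // => /orP[]; [left|right].
Qed.

Lemma part1_gen pi (eps : int) (p q : nat) d (j : int) :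
  gprime pi -> gdvd pi (2 * p * q)%:R -> 0 <= j -> Vv pi 4 (4 * j) ->
  Wv pi (2 * eps%:~R * (p + q)%:R) (2 * j) -> ord_odd pi d -> ~ selmer_phi eps p q d.
Proof.
move=> hp hdv j0 h4 hA [k [a [b [[ha hb] na nb ed ok]]]] [_ _ hloc].
have hd : Vv pi d k by exists a, b.
exact: (no_loc_solv hp hd ok j0 h4 hA (hloc pi hp hdv)).
Qed.

Lemma pi2_four : Vv (1 - 'i) 4 (4 * 1).
Proof.
exists (-1), 1; split; try exact: Zi1.
- exact: ZiN Zi1.
- by move=> /gdvdN; rewrite opprK; apply: gprime_ndvd1 pi2_gprime.
- exact: gprime_ndvd1 pi2_gprime.
have -> : (4 * 1 : int) = 4%:Z by [].
rewrite -exprnP divr1.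
ring: i2.
Qed.

Lemma pi2_A (eps : int) (p q : nat) :
  Wv (1 - 'i) (2 * eps%:~R * (p + q)%:R) (2 * 1).
Proof.
exists ('i * (eps * (p + q)%:Z)%:~R), 1; split.
- by apply: ZiM; [exact: Zi_i | exact: Zi_int].
- exact: Zi1.
- exact: gprime_ndvd1 pi2_gprime.
have -> : (2 * 1 : int) = 2%:Z by [].
rewrite -exprnP divr1 rmorphM /= natzR; ring: i2.
Qed.

Lemma pi2_dvd2pq (p q : nat) : gdvd (1 - 'i) (2 * p * q)%:R.
Proof.
exists ((1 + 'i) * (p * q)%:R); split.
  by apply: ZiM; [apply: ZiD; [exact: Zi1 | exact: Zi_i] | exact: Zi_nat].
rewrite !natrM; ring: i2.
Qed.

Lemma p_four l : prime l -> odd l -> (l %% 4 = 3)%N -> Vv l%:R 4 (4 * 0).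
Proof.
move=> hl ol l4; exists 4, 1; split; try exact: Zi1.
- exact: (Zi_nat 4).
- have -> : (4 : algC) = (4 : int)%:~R + 'i * (0 : int)%:~R by rewrite mulr0 addr0.
  rewrite p_dvd => -[h _]; move: h; rewrite Fdvd // => /eqP h.
  have : (2%:R : 'F_l) * 2%:R == 0 by rewrite -natrM; apply/eqP; exact: h.
  by rewrite mulf_eq0 orbb (negPf (F2nz hl ol)).
- exact: gprime_ndvd1 (p_gprime hl l4).
by have -> : (4 * 0 : int) = 0 by []; rewrite expr0z mul1r divr1.
Qed.

Lemma p_dvd2pq (p q : nat) : gdvd p%:R (2 * p * q)%:R.
Proof. by exists (2 * q)%:R; split; [exact: Zi_nat | rewrite !natrM; ring]. Qed.

Lemma nu_four (q : nat) (nu : algC) (r : int) : prime q -> odd q ->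
  (forall a b : int, gdvd nu (a%:~R + 'i * b%:~R) <-> (q %| a + r * b)%Z) ->
  gprime nu -> Vv nu 4 (4 * 0).
Proof.
move=> hq oq hch hp; exists 4, 1; split; try exact: Zi1.
- exact: (Zi_nat 4).
- have -> : (4 : algC) = (4 : int)%:~R + 'i * (0 : int)%:~R by rewrite mulr0 addr0.
  rewrite hch mulr0 addr0 Fdvd // => /eqP h.
  have : (2%:R : 'F_q) * 2%:R == 0 by rewrite -natrM; apply/eqP; exact: h.
  by rewrite mulf_eq0 orbb (negPf (F2nz hq oq)).
- exact: gprime_ndvd1.
by have -> : (4 * 0 : int) = 0 by []; rewrite expr0z mul1r divr1.
Qed.

Lemma nu_dvd2pq (p q : nat) (nu : algC) : Zi nu -> q%:R = nu * nu^* -> gdvd nu (2 * p * q)%:R.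
Proof.
move=> hZ hq; exists ((2 * p)%:R * nu^*); split.
  by apply: ZiM; [exact: (Zi_nat (2 * p)) | exact: ZiC].
by rewrite natrM hq; ring.
Qed.

Fixpoint newt (u s0 : algC) (k : nat) : algC :=
  if k is k'.+1 then let s := newt u s0 k' in s - (s ^+ 2 - u) / (2 * s) else s0.

Lemma Vv_nz pi x m : gprime pi -> Vv pi x m -> x != 0.
Proof.
move=> hp [a [b [_ _ na nb ->]]].
have pm : pi ^ m != 0 by rewrite expfz_eq0 negb_and gprime_nz ?orbT.
by rewrite !mulf_neq0 // ?invr_neq0 // ?(ndvd_nz na) ?(ndvd_nz nb).
Qed.

Lemma newt_inv pi u s0 (e2 n0 : nat) : gprime pi -> Vv pi 2 e2%:Z -> Kq u -> Kq s0 ->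
  Vv pi s0 0 -> Wv pi (s0 ^+ 2 - u) n0%:Z -> (2 * e2 + 1 <= n0)%N ->
  forall k, [/\ Kq (newt u s0 k), Vv pi (newt u s0 k) 0,
              Wv pi (newt u s0 k ^+ 2 - u) (n0 + k)%N%:Z &
              Wv pi (newt u s0 k.+1 - newt u s0 k) k.+1%:Z].
Proof.
move=> hp h2 hu hs0 v0 w0 hn.
suff step : forall s k, Kq s -> Vv pi s 0 -> Wv pi (s ^+ 2 - u) (n0 + k)%N%:Z ->
  let s' := s - (s ^+ 2 - u) / (2 * s) in
  [/\ Kq s', Vv pi s' 0, Wv pi (s' ^+ 2 - u) (n0 + k.+1)%N%:Z & Wv pi (s' - s) k.+1%:Z].
  have base : forall k, [/\ Kq (newt u s0 k), Vv pi (newt u s0 k) 0 &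
              Wv pi (newt u s0 k ^+ 2 - u) (n0 + k)%N%:Z].
    elim => [|k [IH1 IH2 IH3]]; first by split => //; rewrite addn0.
    by have [? ? ? _] := step _ k IH1 IH2 IH3; split.
  move=> k; have [b1 b2 b3] := base k; split => //.
  by have [_ _ _ ?] := step _ k b1 b2 b3.
move=> s k hs vs ws s'.
have s0nz : s != 0 by exact: Vv_nz hp vs.
have v2s : Vv pi (2 * s) (e2%:Z + 0) by apply: VvM.
have hd : Wv pi (- ((s ^+ 2 - u) / (2 * s))) ((n0 + k)%N%:Z - (e2%:Z + 0)).
  by apply: WvN; apply: WvV.
have ed : s' - s = - ((s ^+ 2 - u) / (2 * s)) by rewrite /s'; ring.
split.
- apply: KqB => //; apply: KqDiv; [apply: KqB => //; exact: KqM | apply: KqM => //].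
  exact: (Kq_Zi (Zi_nat 2)).
- have -> : s' = s + - ((s ^+ 2 - u) / (2 * s)) by [].
  by apply: (Vv_add_lt (n := (n0 + k)%N%:Z - (e2%:Z + 0))) => //; lia.
- have -> : s' ^+ 2 - u = ((s ^+ 2 - u) / (2 * s)) ^+ 2.
    rewrite /s'; field; by rewrite s0nz.
  apply: (Wv_mono hp (n := ((n0 + k)%N%:Z - (e2%:Z + 0)) + ((n0 + k)%N%:Z - (e2%:Z + 0)))).
    by rewrite expr2; apply: WvM => //; apply: WvV.
  lia.
by rewrite ed; apply: (Wv_mono hp hd); lia.
Qed.

Lemma cauchy_of_steps pi (s : nat -> algC) : gprime pi -> (forall n, Kq (s n)) ->
  (forall k, Wv pi (s k.+1 - s k) k.+1%:Z) -> vcauchy pi s.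
Proof.
move=> hp hK hst; split => // N.
have key : forall M j, Wv pi (s (M + j)%N - s M) M.+1%:Z.
  move=> M; elim => [|j IH]; first by rewrite addn0 subrr; exact: Wv0.
  have -> : s (M + j.+1)%N - s M = (s (M + j).+1 - s (M + j)%N) + (s (M + j)%N - s M).
    by rewrite addnS; ring.
  apply: WvD => //; apply: (Wv_mono hp (hst _)); lia.
exists N => m n hm hn; apply/vge_Wv.
have -> : s m - s n = (s (N + (m - N))%N - s N) - (s (N + (n - N))%N - s N).
  by rewrite !subnKC //; ring.
by apply: (Wv_mono hp (n := N.+1%:Z)); [apply: WvB | lia].
Qed.

Lemma newt_conv pi u s0 (e2 n0 : nat) : gprime pi -> Vv pi 2 e2%:Z -> Kq u -> Kq s0 ->
  Vv pi s0 0 -> Wv pi (s0 ^+ 2 - u) n0%:Z -> (2 * e2 + 1 <= n0)%N ->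
  vcauchy pi (newt u s0) /\
  forall N : nat, exists M, forall n, (M <= n)%N -> Wv pi (newt u s0 n ^+ 2 - u) N%:Z.
Proof.
move=> hp h2 hu hs0 v0 w0 hn; have I := newt_inv hp h2 hu hs0 v0 w0 hn.
split.
  apply: cauchy_of_steps => // [n|k]; first by have [] := I n.
  by have [] := I k.
move=> N; exists N => n hnN; have [_ _ h _] := I n.
by apply: (Wv_mono hp h); lia.
Qed.

Lemma cauchy_const pi c : gprime pi -> Kq c -> vcauchy pi (fun _ => c).
Proof.
move=> hp hc; split => // N; exists 0%N => m n _ _; apply/vge_Wv.
by rewrite subrr; exact: Wv0.
Qed.

Lemma cauchy_scale pi c (s : nat -> algC) : gprime pi -> Zi c -> vcauchy pi s ->
  vcauchy pi (fun n => c * s n).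
Proof.
move=> hp hc [hK hC]; split; first by move=> n; apply: KqM => //; exact: Kq_Zi.
move=> N; have [M hM] := hC N; exists M => m n hm hn; apply/vge_Wv.
rewrite -mulrBr -[N%:Z]add0r; apply: WvM => //; first exact: Wv_Zi.
by apply/vge_Wv; apply: hM.
Qed.


Lemma vnull_scale pi c (f : nat -> algC) : gprime pi -> Zi c ->
  (forall N : nat, exists M, forall n, (M <= n)%N -> Wv pi (f n) N%:Z) ->
  vnull pi (fun n => c * f n).
Proof.
move=> hp hc hf N; have [M hM] := hf N; exists M => n hn; apply/vge_Wv.
by rewrite -[N%:Z]add0r; apply: WvM => //; [exact: Wv_Zi | exact: hM].
Qed.

Lemma vnull_ext pi (f g : nat -> algC) : (forall n, f n = g n) -> vnull pi g -> vnull pi f.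
Proof. by move=> e h N; have [M hM] := h N; exists M => n hn; rewrite e; apply: hM. Qed.

Lemma loc_sqrt_i pi (eps : int) (p q : nat) s0 : gprime pi -> Vv pi 2 0 -> Zi s0 ->
  Vv pi s0 0 -> Wv pi (s0 ^+ 2 - 'i) 1 -> loc_solv pi eps p q 'i.
Proof.
move=> hp h2 hs0 v0 w0.
have Ki : Kq 'i by exact: (Kq_Zi Zi_i).
have [hC hN] := newt_conv (e2 := 0) (n0 := 1) hp h2 Ki (Kq_Zi hs0) v0 w0 isT.
exists (fun _ => 0), (newt 'i s0); split => //.
  exact: cauchy_const (Kq_Zi Zi0).
apply: (vnull_ext (g := fun n => 'i * (newt 'i s0 n ^+ 2 - 'i))).
  by move=> n; rewrite /Cd_eq; ring: i2.
exact: vnull_scale hp Zi_i hN.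
Qed.

Lemma pi2_ndvd_i : ~ gdvd (1 - 'i) 'i.
Proof.
move=> h; have : gdvd (1 - 'i) ((0 : int)%:~R + 'i * (1 : int)%:~R) by rewrite mulr1 add0r.
by rewrite pi2_dvd => -[t]; lia.
Qed.

Lemma loc_pi2 (eps : int) (p : nat) (t : int) : (p.+1)%:Z = 8 * t ->
  loc_solv (1 - 'i) eps p (p + 2) 'i.
Proof.
move=> ept; set u : algC := (eps * (p.+1)%:Z - 1)%:~R.
have hp := pi2_gprime.
have h2 : Vv (1 - 'i) 2 2%N%:Z.
  exists 'i, 1; split; [exact: Zi_i | exact: Zi1 | exact: pi2_ndvd_i | exact: gprime_ndvd1 hp |].
  by rewrite -exprnP divr1; ring: i2.
have vi : Vv (1 - 'i) 'i 0.
  exists 'i, 1; split; [exact: Zi_i | exact: Zi1 | exact: pi2_ndvd_i | exact: gprime_ndvd1 hp |].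
  by rewrite expr0z mul1r divr1.
have wi : Wv (1 - 'i) ('i ^+ 2 - u) 6%N%:Z.
  exists ('i * (eps * t)%:~R), 1; split; [by apply: ZiM; [exact: Zi_i|exact: Zi_int]|exact: Zi1|exact: gprime_ndvd1 hp|].
  have e1 : ((p.+1)%:Z%:~R : algC) = 8 * t%:~R by rewrite ept rmorphM.
  rewrite -exprnP divr1 /u !(rmorphB, rmorphM) /= e1; ring: i2.
have [hC hN] := newt_conv hp h2 (Kq_Zi (Zi_int _)) (Kq_Zi Zi_i) vi wi isT.
exists (fun _ => (1 + 'i) / 2), (fun n => (1 - 'i) * newt u 'i n); split.
- apply: cauchy_const => //; exists (2^-1), (2^-1).
  by rewrite fmorphV /= -[2 : rat]/(2%:R) ratr_nat; field.
- by apply: cauchy_scale => //; apply: ZiB; [exact: Zi1 | exact: Zi_i].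
apply: (vnull_ext (g := fun n => 2 * (newt u 'i n ^+ 2 - u))).
  move=> n; rewrite /Cd_eq /u !(rmorphB, rmorphM) /= -natzR natrD.
  have e2 : (2 : algC) * 2^-1 = 1 by rewrite divff // pnatr_eq0.
  set s := newt _ _ _.
  have hh2 : ((2%Z)%:~R : algC) = 2 by [].
  have hp2 : ((p + 2)%N%:R : algC) = p%:R + 2 by rewrite natrD.
  have hp1 : ((p.+1)%:Z%:~R : algC) = p%:R + 1.
    by change (((p.+1)%:R : algC) = p%:R + 1); rewrite mulrSr.
  by rewrite hh2 hp2 hp1; field: i2.
exact: (vnull_scale (c := 2) (f := fun n => newt u 'i n ^+ 2 - u) hp (Zi_nat 2) hN).
Qed.

Lemma gprime_ndvd_i pi : gprime pi -> ~ gdvd pi 'i.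
Proof.
move=> hp h; apply: (gprime_ndvd1 hp).
have -> : (1 : algC) = 'i * (- 'i) by rewrite mulrN i2 opprK.
by apply: gdvdMr => //; apply: ZiN; exact: Zi_i.
Qed.

Lemma dvd_Wv1 pi x : gprime pi -> gdvd pi x -> Wv pi x 1.
Proof.
move=> hp [c [hc ->]]; exists c, 1; split => //; [exact: Zi1 | exact: gprime_ndvd1 |].
by rewrite expr1z divr1.
Qed.

Lemma start_i pi s0 : gprime pi -> Zi s0 -> gdvd pi (s0 ^+ 2 - 'i) ->
  Vv pi s0 0 /\ Wv pi (s0 ^+ 2 - 'i) 1.
Proof.
move=> hp hs h; split; last exact: dvd_Wv1.
exists s0, 1; split => //; [exact: Zi1 | | exact: gprime_ndvd1 | by rewrite expr0z mul1r divr1].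
move=> hd; apply: (gprime_ndvd_i hp).
have -> : 'i = s0 * s0 - (s0 ^+ 2 - 'i) by rewrite expr2; ring.
by apply: gdvdB => //; apply: gdvdMr.
Qed.

Lemma two_pow_sign l k : prime l -> l = (4 * k + 3)%N ->
  ((2%:R : 'F_l) ^+ (2 * k + 1) = 1) \/ ((2%:R : 'F_l) ^+ (2 * k + 1) = -1).
Proof.
move=> hl el; apply: Fsq1; rewrite -exprM.
have ol : odd l by rewrite el oddD oddM.
have := Fermat hl (F2nz hl ol).
by have -> : l.-1 = ((2 * k + 1) * 2)%N by rewrite el; lia.
Qed.

Lemma loc_p (eps : int) (p q : nat) k : prime p -> p = (4 * k + 3)%N -> loc_solv p%:R eps p q 'i.
Proof.
move=> hp ep; have p4 : (p %% 4 = 3)%N by rewrite ep; lia.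
have op : odd p by rewrite ep oddD oddM.
have hpp := p_gprime hp p4.
have h2 : Vv p%:R 2 0.
  exists 2, 1; split; [exact: (Zi_nat 2) | exact: Zi1 | | exact: gprime_ndvd1 | by rewrite expr0z mul1r divr1].
  have -> : (2 : algC) = (2 : int)%:~R + 'i * (0 : int)%:~R by rewrite mulr0 addr0.
  by rewrite p_dvd Fdvd // => -[/eqP h _]; have := F2nz hp op; rewrite -[2%:R]/((2%:Z)%:~R) h eqxx.
set x : int := 2 ^+ k.
have ex : ((2 * x ^+ 2)%:~R : 'F_p) = 2%:R ^+ (2 * k + 1).
  rewrite /x rmorphM !rmorphXn /= -exprM -exprS; congr (_ ^+ _); lia.
have [e1|e1] := two_pow_sign hp ep.
  have hZ : Zi (x%:~R + 'i * x%:~R) by exists x, x.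
  have hd : gdvd p%:R ((x%:~R + 'i * x%:~R) ^+ 2 - 'i).
    have -> : (x%:~R + 'i * x%:~R) ^+ 2 - 'i = (0 : int)%:~R + 'i * (2 * x ^+ 2 - 1)%:~R :> algC.
      by rewrite !(rmorphB, rmorphM, rmorphXn) /=; ring: i2.
    rewrite p_dvd; split; first exact: dvdz0.
    by rewrite Fdvd // rmorphB /= ex e1 subrr.
  have [hv hw] := start_i hpp hZ hd.
  exact: (loc_sqrt_i eps p q hpp h2 hZ hv hw).
have hZ : Zi ((- 2 * x ^+ 3)%:~R + 'i * (2 * x ^+ 3)%:~R) by exists (- 2 * x ^+ 3), (2 * x ^+ 3).
have hd : gdvd p%:R (((- 2 * x ^+ 3)%:~R + 'i * (2 * x ^+ 3)%:~R) ^+ 2 - 'i).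
  have -> : ((- 2 * x ^+ 3)%:~R + 'i * (2 * x ^+ 3)%:~R) ^+ 2 - 'i =
            (0 : int)%:~R + 'i * (- (2 * x ^+ 2) ^+ 3 - 1)%:~R :> algC.
    by rewrite !(rmorphB, rmorphN, rmorphM, rmorphXn) /=; ring: i2.
  rewrite p_dvd; split; first exact: dvdz0.
  by rewrite Fdvd // rmorphB rmorphN rmorphXn /= ex e1 -signr_odd /= opprK subrr.
have [hv hw] := start_i hpp hZ hd.
exact: (loc_sqrt_i eps p q hpp h2 hZ hv hw).
Qed.

Lemma exists_y4 l k : prime l -> l = (8 * k + 1)%N -> exists y : 'F_l, y ^+ 4 = -1.
Proof.
move=> hl el.
have k0 : (0 < k)%N by case: k el => // el; move: hl; rewrite el.
have [x [x0 hx]] : exists x : 'F_l, x != 0 /\ x ^+ (4 * k) != 1.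
  apply: NNPP => H.
  have all1 : forall x : 'F_l, x != 0 -> x ^+ (4 * k) = 1.
    move=> x x0; apply/eqP; apply: NNPP => hx; apply: H; exists x; split => //; exact/negP.
  pose P : {poly 'F_l} := 'X^(4 * k) - 1.
  have sP : size P = (4 * k).+1 by rewrite size_Xn_sub_1 //; lia.
  have P0 : P != 0 by rewrite -size_poly_eq0 sP.
  have hall : all (root P) (enum [set~ (0 : 'F_l)]).
    apply/allP => x; rewrite mem_enum in_setC1 => x0.
    by rewrite /root /P !hornerE all1 // subrr.
  have := max_poly_roots P0 hall (enum_uniq _).
  rewrite -cardE cardsC1 sP card_Fp // el; lia.
exists (x ^+ k).
have h8 : (x ^+ k ^+ 4) ^+ 2 = 1.
  rewrite -!exprM -(Fermat hl x0); congr (_ ^+ _); rewrite el; lia.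
case: (Fsq1 h8) => // h1; exfalso; move: hx; rewrite mulnC exprM h1 eqxx //.
Qed.

Lemma exists_sqrt_r l k (r : int) : prime l -> l = (8 * k + 1)%N ->
  ((r ^+ 2 + 1)%:~R : 'F_l) = 0 -> exists x : int, ((x ^+ 2 - r)%:~R : 'F_l) = 0.
Proof.
move=> hl el hr.
have [y hy] := exists_y4 hl el.
have hr2 : (r%:~R : 'F_l) ^+ 2 = -1.
  by move: hr; rewrite rmorphD rmorphXn rmorph1 /= => /eqP; rewrite addr_eq0 => /eqP.
have : ((r%:~R : 'F_l) - y ^+ 2) * (r%:~R + y ^+ 2) = 0.
  by rewrite -subr_sqr hr2 -exprM hy subrr.
move/eqP; rewrite mulf_eq0 subr_eq0 addr_eq0 => /orP[] /eqP e.
  have [x hx] := Fint y; exists x; by rewrite rmorphB rmorphXn /= hx e subrr.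
have [x hx] := Fint (y ^+ 3); exists x.
rewrite rmorphB rmorphXn /= hx e -exprM.
have -> : (3 * 2 = 4 + 2)%N by [].
by rewrite exprD hy mulN1r subrr.
Qed.

Lemma loc_nu (eps : int) (p q : nat) (nu : algC) (r : int) k :
  prime q -> q = (8 * k + 1)%N -> gprime nu ->
  (forall a b : int, gdvd nu (a%:~R + 'i * b%:~R) <-> (q %| a + r * b)%Z) ->
  ((r ^+ 2 + 1)%:~R : 'F_q) = 0 -> loc_solv nu eps p q 'i.
Proof.
move=> hq ek hp hch hr.
have oq : odd q by rewrite ek oddD oddM.
have [x hx] := exists_sqrt_r hq ek hr.
have hZ : Zi x%:~R by exact: Zi_int.
have hd : gdvd nu ((x%:~R : algC) ^+ 2 - 'i).
  have -> : (x%:~R : algC) ^+ 2 - 'i = (x ^+ 2)%:~R + 'i * (-1 : int)%:~R.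
    by rewrite rmorphXn rmorphN rmorph1 /=; ring.
  by rewrite hch Fdvd //; apply/eqP; rewrite -hx; congr (_%:~R); ring.
have [hv hw] := start_i hp hZ hd.
apply: (loc_sqrt_i eps p q hp _ hZ hv hw).
exists 2, 1; split; [exact: (Zi_nat 2) | exact: Zi1 | | exact: gprime_ndvd1 | by rewrite expr0z mul1r divr1].
have -> : (2 : algC) = (2 : int)%:~R + 'i * (0 : int)%:~R by rewrite mulr0 addr0.
by rewrite hch mulr0 addr0 Fdvd // => /eqP h; have := F2nz hq oq; rewrite -[2%:R]/((2%:Z)%:~R) h eqxx.
Qed.

Lemma loc_assoc pi X c (eps : int) (p q : nat) d : Zi c -> gunit c -> X = pi * c ->
  loc_solv X eps p q d -> loc_solv pi eps p q d.
Proof.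
move=> hc [_ [c' [hc' ec']]] eX [z [w [[hz cz] [hw cw] hn]]].
have tr : forall y (N : nat), vge X y N -> vge pi y N.
  move=> y N [a [b [ha hb nb ->]]]; exists (c ^+ N * a), b; split => //.
  - by apply: ZiM => //; apply: ZiX.
  - move=> [e [he eb]]; apply: nb; exists (c' * e); split; first exact: ZiM.
    by rewrite eb eX -mulrA [c * _]mulrA -ec' mul1r.
  - by rewrite eX exprMn; ring.
exists z, w; split.
- by split => // N; have [M hM] := cz N; exists M => m n h1 h2; apply: tr; apply: hM.
- by split => // N; have [M hM] := cw N; exists M => m n h1 h2; apply: tr; apply: hM.
by move=> N; have [M hM] := hn N; exists M => n h; apply: tr; apply: hM.
Qed.

Lemma assoc_norm pi X (n : nat) : gprime pi -> gdvd pi X -> X * X^* = n%:R ->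
  (forall m, (2 <= m)%N -> (m %| n)%N -> pi * pi^* = m%:R -> m = n) ->
  exists c, [/\ Zi c, gunit c & X = pi * c].
Proof.
move=> hp [c [hc eX]] hn hm; exists c; split => //.
have [P [hP P2]] := gprime_nrm hp; have [C hC] := Zi_nrm hc.
have enn : n = (P * C)%N.
  by apply/eqP; rewrite -(eqr_nat algC) natrM -hP -hC -hn eX; apply/eqP; exact: nrmM.
have ePn := hm P P2 ltac:(by rewrite enn dvdn_mulr) hP.
apply: nrm_unit => //; rewrite hC.
have : (P * C = P * 1)%N by rewrite muln1 -enn ePn.
by move/eqP; rewrite eqn_mul2l => /orP[/eqP P0|/eqP ->] //; move: P2; rewrite P0.
Qed.

Lemma gprime_or pi a b : gprime pi -> Zi a -> Zi b -> gdvd pi (a * b) -> gdvd pi a \/ gdvd pi b.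
Proof. by move=> [_ _ _ h] ha hb; apply: h. Qed.

Lemma classify pi (p q : nat) mu : gprime pi -> Zi mu -> q%:R = mu * mu^* ->
  gdvd pi (2 * p * q)%:R ->
  [\/ gdvd pi (1 - 'i), gdvd pi p%:R, gdvd pi mu | gdvd pi mu^*].
Proof.
move=> hp hmu hq hd.
have Z1 : Zi (1 - 'i) by apply: ZiB; [exact: Zi1 | exact: Zi_i].
have Zmus : Zi mu^* by exact: ZiC.
have e : (2 * p * q)%:R = (1 - 'i) * ('i * ((1 - 'i) * (p%:R * (mu * mu^*)))) :> algC.
  by rewrite !natrM hq; ring: i2.
move: hd; rewrite e.
move=> /(gprime_or hp Z1 _) [| //|]; first by repeat (apply: ZiM => //); [exact: Zi_i|exact: Zi_nat].
  by move=> h; apply: Or41.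
move=> /(gprime_or hp Zi_i _) [|h|]; first by repeat (apply: ZiM => //); exact: Zi_nat.
  by exfalso; exact: gprime_ndvd_i hp h.
move=> /(gprime_or hp Z1 _) [| //|]; first by repeat (apply: ZiM => //); exact: Zi_nat.
  by move=> h; apply: Or41.
move=> /(gprime_or hp (Zi_nat p) _) [| //|]; first exact: ZiM.
  by move=> h; apply: Or42.
by move=> /(gprime_or hp hmu Zmus) [] h; [apply: Or43 | apply: Or44].
Qed.

Lemma pi2_norm : forall m, (2 <= m)%N -> (m %| 2)%N -> forall pi : algC, pi * pi^* = m%:R -> m = 2%N.
Proof. by move=> m m2 /(@dvdn_leq m 2 isT) m2' _ _; lia. Qed.

Lemma prime_norm q : prime q -> forall m, (2 <= m)%N -> (m %| q)%N -> forall pi : algC, pi * pi^* = m%:R -> m = q.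
Proof.
move=> hq m m2 dm _ _; have [_ h] := primeP hq.
by case/orP: (h m dm) => /eqP // m1; move: m2; rewrite m1.
Qed.

Lemma p_norm l : prime l -> (l %% 4 = 3)%N -> forall m, (2 <= m)%N -> (m %| l * l)%N ->
  forall pi : algC, Zi pi -> pi * pi^* = m%:R -> m = (l * l)%N.
Proof.
move=> hl l4 m m2 dm pi [a [b ->]]; rewrite Zi_normE.
have : (m %| l ^ 2)%N by rewrite expnS expn1.
case/(dvdn_pfactor _ _ hl) => e; case: e => [|[|[|e]]] // _ em; rewrite em in m2 *;
  try by [rewrite expn0 in m2 | rewrite expnS expn1].
rewrite expn1 -natzR => /intr_inj eab.
have : (l %| a ^+ 2 + b ^+ 2)%Z by rewrite -eab dvdzz.
case/(p_sum_sq hl l4) => /dvdzP [a' ea] /dvdzP [b' eb].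
have : l%:Z * (l%:Z * (a' ^+ 2 + b' ^+ 2)) = l%:Z * 1.
  by rewrite mulr1 -[in RHS]eab ea eb; ring.
move=> /(mulfI _) h; have h' := h ltac:(apply/eqP; have := prime_gt1 hl; lia).
have := dvdz_mulr (a' ^+ 2 + b' ^+ 2) (dvdzz l%:Z).
by rewrite h' dvdz1 /= => /eqP l1; move: hl; rewrite l1.
Qed.

Lemma nu_resid (q : nat) (nu : algC) (r : int) k A B :
  prime q -> q = (8 * k + 5)%N ->
  (forall a b : int, gdvd nu (a%:~R + 'i * b%:~R) <-> (q %| a + r * b)%Z) ->
  ((r ^+ 2 + 1)%:~R : 'F_q) = 0 -> Zi A -> Zi B -> ~ gdvd nu A -> ~ gdvd nu B ->
  gdvd nu ('i * A ^+ 2 - B ^+ 2) -> False.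
Proof.
move=> hq ek hch hr [a1 [a2 ->]] [b1 [b2 ->]] nA nB hd.
have oq : odd q by rewrite ek oddD oddM.
have ec : 'i * (a1%:~R + 'i * a2%:~R) ^+ 2 - (b1%:~R + 'i * b2%:~R) ^+ 2 =
   (- 2 * a1 * a2 - b1 ^+ 2 + b2 ^+ 2)%:~R + 'i * (a1 ^+ 2 - a2 ^+ 2 - 2 * b1 * b2)%:~R :> algC.
  by rewrite !(rmorphB, rmorphD, rmorphN, rmorphM, rmorphXn) /=; ring: i2.
move: hd; rewrite ec hch Fdvd //.
have -> : - 2 * a1 * a2 - b1 ^+ 2 + b2 ^+ 2 + r * (a1 ^+ 2 - a2 ^+ 2 - 2 * b1 * b2) =
  r * (a1 + r * a2) ^+ 2 - (b1 + r * b2) ^+ 2 - (r ^+ 2 + 1) * (2 * a1 * a2 + r * a2 ^+ 2 - b2 ^+ 2) by ring.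
rewrite !(rmorphB, rmorphM, rmorphXn) /= hr mul0r subr0 subr_eq0 => /eqP e.
move: nA nB; rewrite !hch !Fdvd // => /negP fa /negP fb.
set FA := ((a1 + r * a2)%:~R : 'F_q) in fa e; set FB := ((b1 + r * b2)%:~R : 'F_q) in fb e.
set R := (r%:~R : 'F_q) in e.
have hR : R ^+ 2 = -1.
  by move: hr; rewrite rmorphD rmorphXn rmorph1 /= => /eqP; rewrite addr_eq0 => /eqP.
have hs : (FB / FA) ^+ 2 = R.
  rewrite expr_div_n; apply: (@mulIf _ (FA ^+ 2)); first exact: expf_neq0.
  rewrite divfK ?expf_neq0 //; move: e; rewrite !expr2 => e; by rewrite e.
have s0 : FB / FA != 0 by rewrite mulf_neq0 // invr_neq0.
have := Fermat hq s0.
have -> : q.-1 = (2 * 2 * (2 * k + 1))%N by rewrite ek; lia.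
rewrite !exprM hs hR -signr_odd oddD oddM /= expr1 => /eqP.
rewrite eq_sym -subr_eq0 opprK => /eqP h.
by have := F2nz hq oq; rewrite mulr2n h eqxx.
Qed.

Lemma nu_ndvd_conj (q : nat) (nu : algC) (r : int) : prime q -> odd q -> Zi nu ->
  q%:R = nu * nu^* ->
  (forall a b : int, gdvd nu (a%:~R + 'i * b%:~R) <-> (q %| a + r * b)%Z) ->
  ((r ^+ 2 + 1)%:~R : 'F_q) = 0 -> ~ gdvd nu nu^*.
Proof.
move=> hq oq [m1 [m2 enu]] hnu hch hr.
have eq : q%:Z = m1 ^+ 2 + m2 ^+ 2.
  by apply: (@intr_inj algC); rewrite natzR hnu enu Zi_normE.
have h1 : (q %| m1 + r * m2)%Z by rewrite -hch -enu; exact: gdvd_refl.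
have -> : nu^* = m1%:~R + 'i * (- m2)%:~R.
  by rewrite enu rmorphD rmorphM /= conjCi !conjz rmorphN /=; ring.
rewrite hch => h2.
move: h1 h2; rewrite !Fdvd // !rmorphD !rmorphM rmorphN /= => /eqP e1 /eqP e2.
have hR : (r%:~R : 'F_q) ^+ 2 = -1.
  by move: hr; rewrite rmorphD rmorphXn rmorph1 /= => /eqP; rewrite addr_eq0 => /eqP.
have R0 : (r%:~R : 'F_q) != 0.
  by apply/eqP => e; move: hR; rewrite e expr0n /= => /eqP; rewrite eq_sym oppr_eq0 oner_eq0.
have em1 : (m1%:~R : 'F_q) = 0.
  have : (2%:R : 'F_q) * m1%:~R = 0.
    have -> : (2%:R : 'F_q) * m1%:~R = (m1%:~R + r%:~R * m2%:~R) + (m1%:~R + r%:~R * - m2%:~R) by ring.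
    by rewrite e1 e2 addr0.
  by move/eqP; rewrite mulf_eq0 (negPf (F2nz hq oq)) => /eqP.
have em2 : (m2%:~R : 'F_q) = 0.
  by move: e1; rewrite em1 add0r => /eqP; rewrite mulf_eq0 (negPf R0) => /eqP.
move: em1 em2 => /eqP; rewrite -Fdvd // => /dvdzP [s es] /eqP; rewrite -Fdvd // => /dvdzP [t et].
have : q%:Z * (q%:Z * (s ^+ 2 + t ^+ 2)) = q%:Z * 1.
  by rewrite mulr1 [in RHS]eq es et; ring.
move/(mulfI _) => h; have h' := h ltac:(apply/eqP; have := prime_gt1 hq; lia).
have := dvdz_mulr (s ^+ 2 + t ^+ 2) (dvdzz q%:Z).
by rewrite h' dvdz1 /= => /eqP q1; move: hq; rewrite q1.
Qed.

Lemma Wv1_dvd pi x : gprime pi -> Zi x -> Wv pi x 1 -> gdvd pi x.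
Proof.
move=> hp hx [a [b [ha hb nb ex]]].
have b0 := ndvd_nz nb.
have : gdvd pi (x * b).
  by exists a; split => //; rewrite ex expr1z; field.
by case/(gprime_or hp hx hb).
Qed.

Lemma nu_no_solv (eps : int) (p : nat) (nu : algC) (r : int) k :
  prime (p + 2) -> (p + 2 = 8 * k + 5)%N -> (eps = 1 \/ eps = -1) -> (0 < p)%N ->
  gprime nu -> Zi nu -> (p + 2)%:R = nu * nu^* ->
  (forall a b : int, gdvd nu (a%:~R + 'i * b%:~R) <-> ((p + 2)%N %| a + r * b)%Z) ->
  ((r ^+ 2 + 1)%:~R : 'F_(p + 2)) = 0 -> ~ loc_solv nu eps p (p + 2) 'i.
Proof.
move=> hq ek heps p0 hp hZ hnu hch hr [z [w [[hz _] [hw _] hn]]].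
have oq : odd (p + 2) by rewrite ek oddD oddM.
have npc := nu_ndvd_conj hq oq hZ hnu hch hr.
have np : ~ gdvd nu p%:R.
  have -> : (p%:R : algC) = (p%:Z)%:~R + 'i * (0 : int)%:~R by rewrite mulr0 addr0.
  by rewrite hch mulr0 addr0 dvdzE /= => /(dvdn_leq p0); lia.
set P : algC := (p * (p + 2))%N%:R.
have VP : Vv nu P 1.
  exists (p%:R * nu^*), 1; split.
  - by apply: ZiM; [exact: Zi_nat | exact: ZiC].
  - exact: Zi1.
  - by apply: gprimeM => //; [exact: Zi_nat | exact: ZiC].
  - exact: gprime_ndvd1.
  by rewrite /P natrM hnu expr1z divr1; ring.
have [M hM] := hn 2%N; have hX := hM M (leqnn M); move/vge_Wv: hX => hX.
set zz := z M in hX; set ww := w M in hX.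
set Y := 2 * zz ^+ 2 - (eps * (p.+1)%:Z)%:~R * 'i.
have heps2 : (eps%:~R : algC) ^+ 2 = 1 by case: heps => ->; rewrite ?rmorph1 ?rmorphN ?rmorph1 /= ?sqrrN expr1n.
have eX : Cd_eq eps p (p + 2) 'i zz ww = 'i * ww ^+ 2 - (Y ^+ 2 + P).
  rewrite /Cd_eq /Y /P rmorphM /= !natrM !natrD.
  have hp1 : ((p.+1)%:Z%:~R : algC) = p%:R + 1.
    by change (((p.+1)%:R : algC) = p%:R + 1); rewrite mulrSr.
  rewrite hp1; ring: i2 heps2.
rewrite eX in hX.
have contra : forall m, Vv nu ('i * ww ^+ 2 - (Y ^+ 2 + P)) m -> m < 2 -> False.
  by move=> m hm lt; exact: (VW_contra hp hm hX lt).
have KY : Kq Y.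
  apply: KqB; first by apply: KqM; [exact: (Kq_Zi (Zi_nat 2)) | rewrite expr2; apply: KqM; exact: hz].
  by apply: KqM; [exact: (Kq_Zi (Zi_int _)) | exact: (Kq_Zi Zi_i)].
have caseS1 : Vv nu (Y ^+ 2 + P) 1 -> False.
  move=> hS; have [w0|wnz] := eqVneq ww 0.
    apply: (contra 1) => //; rewrite w0 expr2 !mul0r mulr0 sub0r; exact: VvN.
  have [u hu] := Vv_exists hp (hw M) wnz.
  have hT : Vv nu ('i * ww ^+ 2) (0 + u * 2%:Z).
    apply: VvM => //; last exact: VvX.
    exists 'i, 1; split; [exact: Zi_i|exact: Zi1|exact: gprime_ndvd_i|exact: gprime_ndvd1|].
    by rewrite expr0z mul1r divr1.
  have [lt|ge] := ltrP (0 + u * 2%:Z) 1.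
    apply: (contra (0 + u * 2%:Z)); last by lia.
    by apply: (Vv_add_lt (n := 1)) => //; apply: WvN; apply: VW.
  apply: (contra 1); last by lia.
  rewrite addrC; apply: (Vv_add_lt (n := 0 + u * 2%:Z)) => //; [exact: VvN | exact: VW | lia].
have [Y0|Ynz] := eqVneq Y 0.
  by apply: caseS1; rewrite Y0 expr2 mul0r add0r.
have [y hy] := Vv_exists hp KY Ynz.
have hY2 : Vv nu (Y ^+ 2) (y * 2%:Z) by exact: VvX.
have [y1|y0] := ltrP 0 y.
  apply: caseS1; rewrite addrC; apply: (Vv_add_lt (n := y * 2%:Z)) => //; [exact: VW | lia].
have hS : Vv nu (Y ^+ 2 + P) (y * 2%:Z).
  by apply: (Vv_add_lt (n := 1)) => //; [exact: VW | lia].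
have [w0|wnz] := eqVneq ww 0.
  apply: (contra (y * 2%:Z)); last by lia.
  by rewrite w0 expr2 !mul0r mulr0 sub0r; exact: VvN.
have [u hu] := Vv_exists hp (hw M) wnz.
have hT : Vv nu ('i * ww ^+ 2) (0 + u * 2%:Z).
  apply: VvM => //; last exact: VvX.
  exists 'i, 1; split; [exact: Zi_i|exact: Zi1|exact: gprime_ndvd_i|exact: gprime_ndvd1|].
  by rewrite expr0z mul1r divr1.
have [ltu|geu] := ltrP u y.
  apply: (contra (0 + u * 2%:Z)); last by lia.
  by apply: (Vv_add_lt (n := y * 2%:Z)) => //; [apply: WvN; apply: VW | lia].
have [gtu|equ] := ltrP y u.
  apply: (contra (y * 2%:Z)); last by lia.
  rewrite addrC; apply: (Vv_add_lt (n := 0 + u * 2%:Z)) => //; [exact: VvN | exact: VW | lia].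
have uy : u = y by lia.
move: hu hy; rewrite uy => -[a [b [ha hb na nb ew]]] [c [e [hc he nc ne eY]]].
set t := nu ^ y in ew eY.
have t0 : t != 0 by rewrite expfz_eq0 negb_and gprime_nz ?orbT.
have b0 := ndvd_nz nb; have e0 := ndvd_nz ne.
set Q := 'i * (a * e) ^+ 2 - (c * b) ^+ 2.
have hZQ : Zi Q.
  by apply: ZiB; [apply: ZiM; [exact: Zi_i | apply: ZiX; exact: ZiM] | apply: ZiX; exact: ZiM].
have eQ : Q = ('i * ww ^+ 2 - (Y ^+ 2 + P) + P) * (b * e) ^+ 2 / t ^+ 2.
  rewrite /ww ew eY /Q; field; by rewrite t0 b0 e0.
have Vt : Vv nu (t ^+ 2) (y * 2%:Z).
  apply: VvX => //; exists 1, 1; split; try exact: Zi1; try exact: gprime_ndvd1.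
  by rewrite mulr1 divr1.
have WQ : Wv nu Q 1.
  rewrite eQ; apply: (Wv_mono hp (n := (1 + 0) - y * 2%:Z)); last by lia.
  apply: WvV => //; apply: WvM => //.
    by apply: WvD => //; [apply: (Wv_mono hp hX) | apply: VW].
  by apply: Wv_Zi => //; apply: ZiX; apply: ZiM.
have hdQ := Wv1_dvd hp hZQ WQ.
apply: (nu_resid hq ek hch hr _ _ _ _ hdQ).
- exact: ZiM.
- exact: ZiM.
- exact: gprimeM.
- exact: gprimeM.
Qed.

Lemma Vv_uniq pi x m n : gprime pi -> Vv pi x m -> Vv pi x n -> m = n.
Proof.
move=> hp h1 h2; case: (ltrgtP m n) => // lt; exfalso.
  exact: (VW_contra hp h1 (VW h2) lt).
exact: (VW_contra hp h2 (VW h1) lt).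
Qed.

Lemma not_ord_odd_i pi : gprime pi -> ~ ord_odd pi 'i.
Proof.
move=> hp [k [a [b [[ha hb] na nb e ok]]]].
have h1 : Vv pi 'i k by exists a, b.
have h0 : Vv pi 'i 0.
  exists 'i, 1; split; [exact: Zi_i|exact: Zi1|exact: gprime_ndvd_i|exact: gprime_ndvd1|].
  by rewrite expr0z mul1r divr1.
by move: ok; rewrite (Vv_uniq hp h1 h0).
Qed.

Lemma part2 (p q : nat) (mu : algC) (eps : int) :
  prime p -> prime q -> odd p -> odd q -> q = (p + 2)%N -> (p %% 4 = 3)%N ->
  Zi mu -> q%:R = mu * mu^* -> (eps = 1 \/ eps = -1) ->
  (selmer_phi eps p q 'i <-> (p %% 8 = 7)%N).
Proof.
move=> hp hq op oq eq p4 hmu hqmu heps; subst q.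
have hmus : Zi mu^* by exact: ZiC.
have hqmus : (p + 2)%:R = mu^* * mu^*^* by rewrite conjCK mulrC.
have [r [hr1 hch hpm]] := split_prime hq oq hmu hqmu.
have [rs [hrs1 hchs hpms]] := split_prime hq oq hmus hqmus.
split.
  move=> [_ _ hloc]; case: (eqVneq (p %% 8)%N 7%N) => [//|ne7]; exfalso.
  have ek : (p + 2 = 8 * (p %/ 8) + 5)%N by have := divn_eq p 8; have := ltn_pmod p (isT : 0 < 8)%N; lia.
  have p0 : (0 < p)%N by apply: prime_gt0.
  exact: (nu_no_solv hq ek heps p0 hpm hmu hqmu hch hr1 (hloc mu hpm (nu_dvd2pq p hmu hqmu))).
move=> p8; set k := (p %/ 8)%N.
have ep : p = (8 * k + 7)%N by rewrite /k; have := divn_eq p 8; lia.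
split.
- split; first exact: (Kq_Zi Zi_i).
  + exact: neq0Ci.
  by move=> pi hpi _; exact: not_ord_odd_i.
- by exists 0, (sqrtC 'i); rewrite /Cd_eq sqrtCK; ring.
move=> pi hpi hd.
have Zpi := gprime_Zi hpi.
case: (classify hpi hmu hqmu hd) => h.
- have nX : (1 - 'i) * (1 - 'i)^* = 2%:R :> algC.
    by rewrite rmorphB rmorph1 /= conjCi; ring: i2.
  have [c [hc uc ec]] := assoc_norm hpi h nX (fun m m2 dm => pi2_norm m2 dm (pi := pi)).
  apply: (loc_assoc hc uc ec); apply: (@loc_pi2 eps p (k%:Z + 1)).
  by rewrite ep; lia.
- have nX : (p%:R : algC) * (p%:R)^* = (p * p)%N%:R by rewrite conjC_nat natrM.
  have [c [hc uc ec]] := assoc_norm hpi h nX (fun m m2 dm => p_norm hp p4 m2 dm Zpi).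
  apply: (loc_assoc hc uc ec); apply: (@loc_p eps p (p + 2) (2 * k + 1)) => //; lia.
- have nX : mu * mu^* = (p + 2)%N%:R by rewrite hqmu.
  have [c [hc uc ec]] := assoc_norm hpi h nX (fun m m2 dm => prime_norm hq m2 dm (pi := pi)).
  apply: (loc_assoc hc uc ec); apply: (@loc_nu eps p (p + 2) mu r (k + 1)) => //; lia.
have nX : mu^* * mu^*^* = (p + 2)%N%:R by rewrite hqmus.
have [c [hc uc ec]] := assoc_norm hpi h nX (fun m m2 dm => prime_norm hq m2 dm (pi := pi)).
apply: (loc_assoc hc uc ec); apply: (@loc_nu eps p (p + 2) mu^* rs (k + 1)) => //; lia.
Qed.

Lemma ZiA (eps : int) (p q : nat) : Zi (2 * eps%:~R * (p + q)%:R).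
Proof. by apply: ZiM; [apply: ZiM; [exact: (Zi_nat 2) | exact: Zi_int] | exact: Zi_nat]. Qed.



Theorem proposition2p9 (p q : nat) (mu : algC) (eps : int) :
  prime p -> prime q -> odd p -> odd q -> q = (p + 2)%N -> (p %% 4 = 3)%N ->
  girred mu -> girred mu^* -> q%:R = mu * mu^* ->
  (eps = 1 \/ eps = -1) ->
  (forall d : algC, in_KS2 p q d ->
     (ord_odd mu d \/ ord_odd mu^* d \/ ord_odd p%:R d \/ ord_odd (1 - 'i) d) ->
     ~ selmer_phi eps p q d)
  /\ (selmer_phi eps p q 'i <-> (p %% 8 = 7)%N).
Proof.
move=> hp hq op oq eq p4 [hmu _ _ _] [hmus _ _ _] hqmu heps.
split; last exact: (part2 hp hq op oq eq p4 hmu hqmu heps).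
have hqmus : q%:R = mu^* * mu^*^* by rewrite conjCK mulrC.
have [r [hr1 hch hpm]] := split_prime hq oq hmu hqmu.
have [rs [hrs1 hchs hpms]] := split_prime hq oq hmus hqmus.
have hA0 pi : gprime pi -> Wv pi (2 * eps%:~R * (p + q)%:R) (2 * 0).
  by move=> hpi; exact: (Wv_Zi hpi (ZiA eps p q)).
move=> d _ [h|[h|[h|h]]].
- exact: (part1_gen hpm (nu_dvd2pq p hmu hqmu) (lexx _) (nu_four hq oq hch hpm) (hA0 _ hpm) h).
- exact: (part1_gen hpms (nu_dvd2pq p hmus hqmus) (lexx _) (nu_four hq oq hchs hpms) (hA0 _ hpms) h).
- have hpp := p_gprime hp p4.
  exact: (part1_gen hpp (p_dvd2pq p q) (lexx _) (p_four hp op p4) (hA0 _ hpp) h).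
- exact: (part1_gen pi2_gprime (pi2_dvd2pq p q) ler01 pi2_four (pi2_A eps p q) h).
Qed.
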